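(* For every product distribution $\mathcal{D}=\prod_{r=1}^d\mathcal{D}_r$ on $[n]^d$, $\Delta(\mathcal{D})\le 5\,\Delta^*(\mathcal{D})$.
   Context: For a distribution $\mathcal{D}_r$ on $[n]$ with mass function $\mu$, the median BST $T_r$ is built recursively: for an interval $I$ of integers, its root is the smallest $t\in I$ with $\mu(\{s\in I:s\le t\})\ge\mu(I)/2$, and the left and right subtrees are the median BSTs of $\{s\in I:s<t\}$ and $\{s\in I:s>t\}$ (empty intervals give empty trees); $T_r$ is the median BST of $[n]$. Depth of a node is the number of edges to the root. $\Delta(\mathcal{D})=\sum_{r=1}^d\mathbb{E}_{x\sim\mathcal{D}_r}[\mathrm{depth}_{T_r}(x)]$, and $\Delta^*(\mathcal{D})=\sum_{r=1}^d\min_T\mathbb{E}_{x\sim\mathcal{D}_r}[\mathrm{depth}_T(x)]$, the minimum over all binary search trees $T$ on $[n]$. *)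

(* Defs.v *)
From mathcomp Require Import all_boot all_order all_algebra.
Set Implicit Arguments. Unset Strict Implicit. Unset Printing Implicit Defensive.
Import Order.TTheory GRing.Theory Num.Theory.
Local Open Scope ring_scope.

(* Binary trees with natural-number keys; keys of [n] are 1..n. *)
Inductive tree := Leaf | Node of tree & nat & tree.

Fixpoint inorder (T : tree) : seq nat :=
  match T with Leaf => [::] | Node l k r => inorder l ++ k :: inorder r end.

Definition is_bst_on (n : nat) (T : tree) : Prop := inorder T = iota 1 n.

Fixpoint depth (T : tree) (x : nat) : nat :=
  match T with
  | Leaf => 0
  | Node l k r =>
      if x == k then 0%N
      else if (x < k)%N then (depth l x).+1 else (depth r x).+1
  end.

Section Dist.
Variable R : realFieldType.

Definition is_dist (n : nat) (mu : nat -> R) : Prop :=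
  (forall i, (1 <= i <= n)%N -> 0 <= mu i) /\ \sum_(1 <= i < n.+1) mu i = 1.

Definition imass (mu : nat -> R) (a len : nat) : R := \sum_(a <= s < a + len) mu s.

(* median BST of the interval {a, ..., a+len-1}; fuel >= len suffices *)
Fixpoint median_tree_fuel (mu : nat -> R) (fuel a len : nat) : tree :=
  match fuel with
  | 0 => Leaf
  | f.+1 =>
      if len == 0%N then Leaf else
      let idx := find (fun t => imass mu a len / 2%:R <= imass mu a (t - a).+1)
                      (iota a len) in
      let t := (a + idx)%N in
      Node (median_tree_fuel mu f a idx) t
           (median_tree_fuel mu f t.+1 (len - idx).-1)
  end.

Definition median_tree (mu : nat -> R) (n : nat) : tree :=
  median_tree_fuel mu n 1 n.

Definition exp_depth (n : nat) (mu : nat -> R) (T : tree) : R :=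
  \sum_(1 <= x < n.+1) mu x * (depth T x)%:R.

(* Delta(D) for the product distribution with marginals mu 0, ..., mu (d-1) *)
Definition Delta (d n : nat) (mu : nat -> nat -> R) : R :=
  \sum_(r < d) exp_depth n (mu r) (median_tree (mu r) n).

End Dist.

(* Main.v *)
Require Import Defs.
From mathcomp Require Import all_boot all_order all_algebra.
From mathcomp Require Import zify ring lra.
Import Order.TTheory GRing.Theory Num.Theory.

Fixpoint spath (T : tree) (x : nat) : seq nat :=
  match T with
  | Leaf => [::]
  | Node l k r =>
      if x == k then [::]
      else k :: (if (x < k)%N then spath l x else spath r x)
  end.

Lemma depth_spath T x : depth T x = size (spath T x).
Proof.
elim: T => [//|l IHl k r IHr] /=.
by case: (x == k) => //; case: (x < k)%N => /=; rewrite ?IHl ?IHr.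
Qed.

Definition inI (a len z : nat) : bool := (a <= z < a + len)%N.

Lemma top_exists T : pairwise ltn (inorder T) ->
  forall a len, (0 < len)%N -> (forall z, inI a len z -> z \in inorder T) ->
  exists2 m, inI a len m & forall y, inI a len y -> y != m -> m \in spath T y.
Proof.
elim: T => [|l IHl k r IHr] /=.
  move=> _ a len Hl H; have : inI a len a by rewrite /inI; lia.
  by move/H; rewrite in_nil.
rewrite pairwise_cat pairwise_cons => /and3P [Hrel Hl /andP [Hk Hrr]] a len Hlen Hin.
have lk : forall z, z \in inorder l -> (z < k)%N.
  by move=> z Hz; move/allrelP: Hrel => /(_ z k Hz); apply; rewrite inE eqxx.
have rk : forall z, z \in inorder r -> (k < z)%N.
  by move=> z Hz; move/allP: Hk => /(_ z Hz).
case Hkin: (inI a len k).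
  exists k => // y _ Hy; rewrite (negbTE Hy); exact: mem_head.
have [Hlt|Hge] := ltnP k a.
  have Hin' : forall z, inI a len z -> z \in inorder r.
    move=> z Hz; move: (Hin z Hz); rewrite mem_cat inE => /orP [/lk|/orP[/eqP E|//]].
      by move: Hz; rewrite /inI; lia.
    by move: Hz; rewrite /inI E; lia.
  have [m Hm Hm2] := IHr Hrr a len Hlen Hin'.
  exists m => // y Hy Hym.
  have -> : (y == k) = false by apply/negbTE; move: Hy; rewrite /inI; lia.
  have -> : (y < k)%N = false by move: Hy; rewrite /inI; lia.
  by rewrite inE (Hm2 y Hy Hym) orbT.
have Hin' : forall z, inI a len z -> z \in inorder l.
  move=> z Hz; move: (Hin z Hz); rewrite mem_cat inE => /orP [//|/orP[/eqP E|/rk]].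
    by move: Hz Hkin; rewrite /inI E => ->.
  by move: Hz Hkin; rewrite /inI; lia.
have [m Hm Hm2] := IHl Hl a len Hlen Hin'.
exists m => // y Hy Hym.
have -> : (y == k) = false by apply/negbTE; move: Hy Hkin; rewrite /inI; lia.
have -> : (y < k)%N = true by move: Hy Hkin; rewrite /inI; lia.
by rewrite inE (Hm2 y Hy Hym) orbT.
Qed.

Lemma count_inI_split a l1 l2 s :
  count (inI a (l1 + l2)) s = (count (inI a l1) s + count (inI (a + l1) l2) s)%N.
Proof.
elim: s => [//|z s IH] /=; rewrite IH /inI.
case H1: (a <= z)%N; case H2: (z < a + (l1 + l2))%N; case H3: (z < a + l1)%N;
  case H4: (a + l1 <= z)%N; case H5: (z < a + l1 + l2)%N => /=; lia.
Qed.
Local Open Scope ring_scope.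
Section Main.
Variable R : realFieldType.

Lemma split3 (F : nat -> R) a t b : (a <= t < b)%N ->
  \sum_(a <= x < b) F x = \sum_(a <= x < t) F x + F t + \sum_(t.+1 <= x < b) F x.
Proof.
move=> /andP [H1 H2]; rewrite (big_cat_nat H1 (ltnW H2)) /= (big_ltn H2).
by rewrite addrA.
Qed.

Lemma le_mul_cnt (m : R) c : 0 <= m -> (1 <= c)%N -> m <= m * c%:R.
Proof.
move=> Hm Hc; have : 1 <= c%:R :> R by rewrite ler1n.
move=> H; nra.
Qed.

Lemma cnt_ge1 (p : pred nat) s z : z \in s -> p z -> (1 <= count p s)%N.
Proof. by move=> Hz Hp; rewrite -has_count; apply/hasP; exists z. Qed.

Variable mu : nat -> R.
Variable n : nat.
Hypothesis mu_ge0 : forall i, (1 <= i <= n)%N -> 0 <= mu i.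
Variable T : tree.
Hypothesis Tpw : pairwise ltn (inorder T).
Hypothesis Tkeys : forall z, (1 <= z <= n)%N -> z \in inorder T.

Definition Cs a len := \sum_(a <= x < a + len) mu x * (count (inI a len) (spath T x))%:R.
Definition Ms t a len := \sum_(a <= x < a + len) mu x * (depth t x)%:R.

Lemma imass_ge0 a len : (1 <= a)%N -> (a + len <= n.+1)%N -> 0 <= imass mu a len.
Proof.
move=> H1 H2; rewrite /imass big_nat_cond; apply: sumr_ge0 => i /andP [Hi _]; apply: mu_ge0; lia.
Qed.

Ltac clia := repeat match goal with H : context [mu] |- _ => clear H end; lia.

Lemma main f : forall a len, (len <= f)%N -> (1 <= a)%N -> (a + len <= n.+1)%N ->
  Ms (median_tree_fuel mu f a len) a len <= 5%:R * Cs a len.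
Proof.
elim: f => [|f IH] a len Hf Ha Hn.
  have -> : len = 0%N by clia.
  by rewrite /Ms /Cs addn0 !big_geq // mulr0.
case: (eqVneq len 0%N) => [->|Hl0].
  by rewrite /Ms /Cs addn0 !big_geq // mulr0.
rewrite /= (negbTE Hl0).
set P := (fun t => _).
set idx := find P (iota a len).
have Hhas : has P (iota a len).
  apply/hasP; exists (a + len.-1)%N; first by rewrite mem_iota; clia.
  rewrite /P; have -> : ((a + len.-1 - a).+1 = len)%N by clia.
  have := imass_ge0 a len Ha Hn; set m := imass mu a len => Hm.
  have H2 : (0:R) < 2%:R by rewrite ltr0n.
  rewrite ler_pdivrMr //; nra.
have Hidx : (idx < len)%N by rewrite /idx -[X in (_ < X)%N](size_iota a len) -has_find.
have Pidx : imass mu a len / 2%:R <= imass mu a idx.+1.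
  have := nth_find 0%N Hhas; rewrite -/idx nth_iota // /P.
  by have -> : ((a + idx - a).+1 = idx.+1)%N by clia.
have Qidx : imass mu a idx <= imass mu a len / 2%:R.
  case: (posnP idx) => [->|Hi].
    by rewrite /imass addn0 big_geq // divr_ge0 ?(imass_ge0 a len Ha Hn) ?ler0n.
  have Hi' : (idx.-1 < idx)%N by clia.
  move: (before_find 0%N Hi'); rewrite -/idx nth_iota; last by clia.
  rewrite /P; have -> : ((a + idx.-1 - a).+1 = idx)%N by clia.
  by move=> /negbT; rewrite -ltNge => /ltW.
set t := (a + idx)%N.
set lenR := (len - idx).-1.
have EtR : (t.+1 + lenR = a + len)%N by rewrite /t /lenR; clia.
have Hat : (a <= t < a + len)%N by rewrite /t; clia.
have Ht1 : (t <= a + len)%N by rewrite /t; clia.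
have Ht2 : (a <= t.+1)%N by rewrite /t; clia.
set Lt := median_tree_fuel mu f a idx.
set Rt := median_tree_fuel mu f t.+1 lenR.
have HL : Ms Lt a idx <= 5%:R * Cs a idx by apply: IH => //; clia.
have HR : Ms Rt t.+1 lenR <= 5%:R * Cs t.+1 lenR by apply: IH; rewrite /lenR /t; clia.
rewrite /Ms /Cs EtR in HR.
rewrite /Ms /Cs in HL.
set muL := \sum_(a <= x < t) mu x.
set muR := \sum_(t.+1 <= x < a + len) mu x.
have Iidx : imass mu a idx = muL by [].
have Iidx1 : imass mu a idx.+1 = muL + mu t.
  by rewrite /imass addnS big_nat_recr //=; clia.
have Ilen : imass mu a len = muL + mu t + muR by rewrite /imass (@split3 _ a t (a + len) Hat).
rewrite Iidx Ilen in Qidx; rewrite Iidx1 Ilen in Pidx.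
have mu0 : forall x, (a <= x < a + len)%N -> 0 <= mu x by move=> x Hx; apply: mu_ge0; clia.
have mut0 : 0 <= mu t by apply: mu0.
have muL0 : 0 <= muL by rewrite /muL big_nat_cond; apply: sumr_ge0 => i /andP [Hi _]; apply: mu0; clia.
have muR0 : 0 <= muR by rewrite /muR big_nat_cond; apply: sumr_ge0 => i /andP [Hi _]; apply: mu0; clia.
have EM : Ms (Node Lt t Rt) a len =
   \sum_(a <= x < t) mu x * (depth Lt x)%:R + muL +
   (\sum_(t.+1 <= x < a + len) mu x * (depth Rt x)%:R + muR).
  rewrite /Ms (@split3 _ a t (a + len) Hat) /= eqxx mulr0 addr0.
  rewrite /muL /muR -!big_split /=; congr (_ + _); apply: eq_big_nat => x Hx.
    have -> : (x == t) = false by apply/negbTE; clia.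
    have -> : (x < t)%N = true by clia.
    by rewrite -addn1 natrD mulrDr mulr1.
  have -> : (x == t) = false by apply/negbTE; clia.
  have -> : (x < t)%N = false by clia.
  by rewrite -addn1 natrD mulrDr mulr1.
change (a + idx)%N with t in HL.
have Ecnt : forall x, count (inI a len) (spath T x) =
   (count (inI a idx) (spath T x) + count (inI t 1) (spath T x)
    + count (inI t.+1 lenR) (spath T x))%N.
  move=> x; have -> : len = (idx + (1 + lenR))%N by rewrite /lenR; clia.
  by rewrite !count_inI_split addnA addn1.
have EC : Cs a len =
  (\sum_(a <= x < t) mu x * (count (inI a idx) (spath T x))%:R
   + \sum_(a <= x < t) mu x * (count (inI t 1) (spath T x))%:R
   + \sum_(a <= x < t) mu x * (count (inI t.+1 lenR) (spath T x))%:R)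
  + (mu t * (count (inI a idx) (spath T t))%:R
   + mu t * (count (inI t 1) (spath T t))%:R
   + mu t * (count (inI t.+1 lenR) (spath T t))%:R)
  + (\sum_(t.+1 <= x < a + len) mu x * (count (inI a idx) (spath T x))%:R
   + \sum_(t.+1 <= x < a + len) mu x * (count (inI t 1) (spath T x))%:R
   + \sum_(t.+1 <= x < a + len) mu x * (count (inI t.+1 lenR) (spath T x))%:R).
  rewrite /Cs (eq_bigr (fun x => mu x * (count (inI a idx) (spath T x))%:R
   + mu x * (count (inI t 1) (spath T x))%:R
   + mu x * (count (inI t.+1 lenR) (spath T x))%:R)); last first.
    by move=> x _; rewrite Ecnt !natrD !mulrDr.
  by rewrite (@split3 _ a t (a + len) Hat) !big_split.
have S0 : forall b c (g : nat -> nat), (a <= b)%N -> (c <= a + len)%N ->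
    0 <= \sum_(b <= x < c) mu x * (g x)%:R.
  move=> b c g Hb Hc; rewrite big_nat_cond; apply: sumr_ge0 => i /andP [Hi _].
  by apply: mulr_ge0; [apply: mu0; clia | apply: ler0n].
have T0 : forall c, 0 <= mu t * c%:R by move=> c; apply: mulr_ge0.
have Hkeys : forall z, inI a len z -> z \in inorder T by move=> z; rewrite /inI => Hz; apply: Tkeys; clia.
have [m Hm Hm2] := @top_exists T Tpw a len (ltac:(rewrite lt0n; exact: Hl0)) Hkeys.
rewrite EM EC.
have HS1 := S0 a t (fun x => count (inI t 1) (spath T x)) (leqnn a) Ht1.
have HS2 := S0 a t (fun x => count (inI t.+1 lenR) (spath T x)) (leqnn a) Ht1.
have HS3 := S0 t.+1 (a + len) (fun x => count (inI a idx) (spath T x)) Ht2 (leqnn _).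
have HS4 := S0 t.+1 (a + len) (fun x => count (inI t 1) (spath T x)) Ht2 (leqnn _).
have HT1 := T0 (count (inI a idx) (spath T t)).
have HT2 := T0 (count (inI t 1) (spath T t)).
have HT3 := T0 (count (inI t.+1 lenR) (spath T t)).
simpl in HS1, HS2, HS3, HS4.
have Hhalf : muL <= mu t + muR /\ muR <= muL + mu t.
  have H2 : (0:R) < 2%:R by rewrite ltr0n.
  move: Qidx Pidx; rewrite ler_pdivrMr // ler_pdivlMr //; split; nra.
case: Hhalf => Hh1 Hh2.
case: (ltngtP m t) => Hmt.
-
  have A1 : muR <= \sum_(t.+1 <= x < a + len) mu x * (count (inI a idx) (spath T x))%:R.
    apply: ler_sum_nat => x Hx; apply: le_mul_cnt; first by apply: mu0; clia.
    apply: (@cnt_ge1 _ _ m); last by move: Hm Hmt; rewrite /inI /t; clia.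
    by apply: Hm2; [rewrite /inI; clia | apply/eqP; clia].
  have A2 : mu t <= mu t * (count (inI a idx) (spath T t))%:R.
    apply: le_mul_cnt => //; apply: (@cnt_ge1 _ _ m); last by move: Hm Hmt; rewrite /inI /t; clia.
    by apply: Hm2; [rewrite /inI; clia | apply/eqP; clia].
  lra.
-
  have A1 : muL <= \sum_(a <= x < t) mu x * (count (inI t.+1 lenR) (spath T x))%:R.
    apply: ler_sum_nat => x Hx; apply: le_mul_cnt; first by apply: mu0; clia.
    apply: (@cnt_ge1 _ _ m); last by move: Hm Hmt; rewrite /inI /t /lenR; clia.
    by apply: Hm2; [rewrite /inI; clia | apply/eqP; clia].
  have A2 : mu t <= mu t * (count (inI t.+1 lenR) (spath T t))%:R.
    apply: le_mul_cnt => //; apply: (@cnt_ge1 _ _ m); last by move: Hm Hmt; rewrite /inI /t /lenR; clia.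
    by apply: Hm2; [rewrite /inI; clia | apply/eqP; clia].
  lra.
-
  subst m.
  have A1 : muL <= \sum_(a <= x < t) mu x * (count (inI t 1) (spath T x))%:R.
    apply: ler_sum_nat => x Hx; apply: le_mul_cnt; first by apply: mu0; clia.
    apply: (@cnt_ge1 _ _ t); last by rewrite /inI; clia.
    by apply: Hm2; [rewrite /inI; clia | apply/eqP; clia].
  have A2 : muR <= \sum_(t.+1 <= x < a + len) mu x * (count (inI t 1) (spath T x))%:R.
    apply: ler_sum_nat => x Hx; apply: le_mul_cnt; first by apply: mu0; clia.
    apply: (@cnt_ge1 _ _ t); last by rewrite /inI; clia.
    by apply: Hm2; [rewrite /inI; clia | apply/eqP; clia].
  lra.
Qed.
End Main.

Theorem lemma5p17 (R : realFieldType) (d n : nat) (mu : nat -> nat -> R) :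
  (forall r, (r < d)%N -> is_dist n (mu r)) ->
  forall T : nat -> tree, (forall r, (r < d)%N -> is_bst_on n (T r)) ->
  Delta d n mu <= 5%:R * \sum_(r < d) exp_depth n (mu r) (T r).
Proof.
move=> Hmu T HT; rewrite /Delta mulr_sumr; apply: ler_sum => r _.
have [Hge0 _] := Hmu r (ltn_ord r).
have Hin := HT r (ltn_ord r); rewrite /is_bst_on in Hin.
have Tpw : pairwise ltn (inorder (T r)).
  by rewrite Hin -(sorted_pairwise ltn_trans) iota_ltn_sorted.
have Tkeys : forall z, (1 <= z <= n)%N -> z \in inorder (T r).
  by move=> z Hz; rewrite Hin mem_iota; lia.
have := @main R (mu r) n Hge0 (T r) Tpw Tkeys n 1 n (leqnn n) (leqnn 1) (leqnn _).
rewrite /Ms /Cs /median_tree /exp_depth add1n => H; apply: (le_trans H).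
rewrite ler_pM2l ?ltr0n //; apply: ler_sum_nat => x Hx.
apply: ler_wpM2l; first by apply: Hge0; lia.
by rewrite ler_nat depth_spath count_size.
Qed.
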